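(* Let $a>0$, $b>0$ and consider the equation $u_t+ax^2u_{xx}+bx^3u_{xx}^2=0$ for $t>0$, $x>0$. Let $c_1,c_2$ be arbitrary real constants and $\varepsilon,\delta\in\{1,-1\}$. Each of the following functions is an exact solution: (1) $u=c_1+\frac{a}{2b}x\left(c_2+\frac a2t-\log x\right)$; (2) $u=c_1-t+4\delta\sqrt{\frac xb}+\frac{a}{2b}x\left(c_2+\frac a2t-\log x\right)$; (3) $u=c_1+\frac{a+2\varepsilon}{2b}x\left(c_2+\frac{a-2\varepsilon}{2}t-\log x\right)$; (4) $u=\varepsilon c_1^2e^{-\varepsilon t}+4\delta c_1e^{-\frac{\varepsilon}{2}t}\sqrt{\frac xb}+\frac{a+2\varepsilon}{2b}x\left(c_2+\frac{a-2\varepsilon}{2}t-\log x\right)$; (5) $u=\frac xb\left[c_1+\left(\varepsilon+\frac{a^2}{4}\right)t-\frac a2\log x+\frac{1}{2k}\left(\delta\sqrt{1-4\varepsilon k^2}-1\right)\left(\frac1k t+\log x\right)\right]$, where $k\neq0$ if $\varepsilon=-1$, and $0<|k|\le\frac12$ if $\varepsilon=1$.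
   Context: This is the non-linear Black--Scholes equation $u_t+ax^2u_{xx}+bx^3u_{xx}^2+c(xu_x-u)=0$ with $c=0$; $\log$ denotes the natural logarithm. *)

(* Defs.v *)
From Stdlib Require Import Reals.
From Coquelicot Require Import Coquelicot.
Open Scope R_scope.

Definition is_BS_solution (a b : R) (u : R -> R -> R) : Prop :=
  exists ut ux uxx : R -> R -> R,
    forall t x, 0 < t -> 0 < x ->
      is_derive (fun s => u s x) t (ut t x) /\
      is_derive (fun y => u t y) x (ux t x) /\
      is_derive (fun y => ux t y) x (uxx t x) /\
      ut t x + a * x ^ 2 * uxx t x + b * x ^ 3 * (uxx t x) ^ 2 = 0.

(* Main.v *)
Require Import Defs.
From Stdlib Require Import Reals Lra.
From Coquelicot Require Import Coquelicot.
Open Scope R_scope.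

Ltac posi := repeat (apply Rmult_lt_0_compat || apply pow_lt || apply Rinv_0_lt_compat || apply exp_pos); try lra; try assumption.
Ltac side x b := try change (x * / b) with (x / b); repeat split; try (apply Rgt_not_eq; posi; fail); try (apply Rlt_gt; posi; fail); try (posi; fail).
Ltac eqn x b := try change (x * / b) with (x / b); field; repeat split; apply Rgt_not_eq; posi.

Lemma sq_trick x b : 0 < b -> 0 < x -> exists s, 0 < s /\ sqrt (x/b) = s /\ x = b * s^2.
Proof. intros. exists (sqrt (x/b)). split. apply sqrt_lt_R0. apply Rdiv_lt_0_compat; lra.
split; auto. rewrite <- Rsqr_pow2, Rsqr_sqrt. field. lra. apply Rlt_le, Rdiv_lt_0_compat; lra. Qed.


Lemma part1 a b c1 c2 : 0<a -> 0<b -> is_BS_solution a b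
    (fun t x => c1 + a / (2 * b) * x * (c2 + a / 2 * t - ln x)).
Proof.
intros Ha Hb.
exists (fun t x => a/(2*b)*x*(a/2)),
  (fun t x => a/(2*b)*(c2 + a/2*t - ln x) - a/(2*b)),
  (fun t x => - (a/(2*b))/x).
intros t x Ht Hx.
assert (Hxb : 0 < x/b) by (apply Rdiv_lt_0_compat; lra).
split; [|split; [|split]].
- auto_derive; [side x b | eqn x b].
- auto_derive; [side x b | eqn x b].
- auto_derive; [side x b | eqn x b].
- cbv beta. field; repeat split; apply Rgt_not_eq; posi.
Qed.

Lemma part2 a b c1 c2 delta : 0<a -> 0<b -> (delta = 1 \/ delta = -1) -> is_BS_solution a b
    (fun t x => c1 - t + 4 * delta * sqrt (x / b)
                + a / (2 * b) * x * (c2 + a / 2 * t - ln x)).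
Proof.
intros Ha Hb Hd.
exists (fun t x => -1 + a/(2*b)*x*(a/2)),
  (fun t x => a/(2*b)*(c2 + a/2*t - ln x) - a/(2*b) + 2*delta/(b*sqrt (x/b))),
  (fun t x => - (a/(2*b))/x - delta/(b^2 * sqrt (x/b)^3)).
intros t x Ht Hx.
assert (Hxb : 0 < x/b) by (apply Rdiv_lt_0_compat; lra).
assert (Hs : 0 < sqrt (x/b)) by (apply sqrt_lt_R0; lra).
split; [|split; [|split]].
- auto_derive; [side x b | eqn x b].
- auto_derive; [side x b | eqn x b].
- auto_derive; [side x b | eqn x b].
- cbv beta. destruct (sq_trick x b Hb Hx) as (s & Hs0 & Hsq & Hxs). rewrite Hsq. subst x.
  destruct Hd; subst delta; field; repeat split; apply Rgt_not_eq; posi.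
Qed.

Lemma part3 a b c1 c2 eps : 0<a -> 0<b -> (eps = 1 \/ eps = -1) -> is_BS_solution a b
    (fun t x => c1 + (a + 2 * eps) / (2 * b) * x
                     * (c2 + (a - 2 * eps) / 2 * t - ln x)).
Proof.
intros Ha Hb He.
exists (fun t x => (a + 2 * eps) / (2 * b)*x*((a - 2 * eps) / 2)),
  (fun t x => (a + 2 * eps) / (2 * b)*(c2 + (a - 2 * eps) / 2*t - ln x) - (a + 2 * eps) / (2 * b)),
  (fun t x => - ((a + 2 * eps) / (2 * b))/x).
intros t x Ht Hx.
assert (Hxb : 0 < x/b) by (apply Rdiv_lt_0_compat; lra).
split; [|split; [|split]].
- auto_derive; [side x b | eqn x b].
- auto_derive; [side x b | eqn x b].
- auto_derive; [side x b | eqn x b].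
- cbv beta. field; repeat split; apply Rgt_not_eq; posi.
Qed.

Lemma part4 a b c1 c2 eps delta : 0<a -> 0<b -> (eps = 1 \/ eps = -1) -> (delta = 1 \/ delta = -1) ->
  is_BS_solution a b
    (fun t x => eps * c1 ^ 2 * exp (- eps * t)
                + 4 * delta * c1 * exp (- (eps / 2) * t) * sqrt (x / b)
                + (a + 2 * eps) / (2 * b) * x
                    * (c2 + (a - 2 * eps) / 2 * t - ln x)).
Proof.
intros Ha Hb He Hd.
exists (fun t x => eps * c1 ^ 2 * (- eps) * exp (- eps * t)
                + 4 * delta * c1 * (- (eps / 2)) * exp (- (eps / 2) * t) * sqrt (x / b)
                + (a + 2 * eps) / (2 * b)*x*((a - 2 * eps) / 2)),
  (fun t x => 2 * delta * c1 * exp (- (eps / 2) * t) / (b * sqrt (x / b)) +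
     (a + 2 * eps) / (2 * b)*(c2 + (a - 2 * eps) / 2*t - ln x) - (a + 2 * eps) / (2 * b)),
  (fun t x => - ((a + 2 * eps) / (2 * b))/x - delta * c1 * exp (- (eps / 2) * t) / (b^2 * sqrt (x/b)^3)).
intros t x Ht Hx.
assert (Hxb : 0 < x/b) by (apply Rdiv_lt_0_compat; lra).
assert (Hs : 0 < sqrt (x/b)) by (apply sqrt_lt_R0; lra).
split; [|split; [|split]].
- auto_derive; [side x b | eqn x b].
- auto_derive; [side x b | eqn x b].
- auto_derive; [side x b | eqn x b].
- cbv beta. destruct (sq_trick x b Hb Hx) as (s & Hs0 & Hsq & Hxs). rewrite Hsq. subst x.
  assert (HE : exp (- eps * t) = exp (- (eps / 2) * t) * exp (- (eps / 2) * t)).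
  { rewrite <- exp_plus. f_equal. field. }
  rewrite HE. set (E := exp (- (eps / 2) * t)).
  destruct Hd; subst delta; destruct He; subst eps; field; repeat split; apply Rgt_not_eq; posi.
Qed.

Ltac fin x b := try change (x * / b) with (x / b); field; repeat split; first [assumption | apply Rgt_not_eq; posi].

Lemma part5 a b c1 eps delta k : 0<a -> 0<b -> (eps = 1 \/ eps = -1) -> (delta = 1 \/ delta = -1) ->
  ((eps = -1 /\ k <> 0) \/ (eps = 1 /\ 0 < Rabs k /\ Rabs k <= 1 / 2)) ->
   is_BS_solution a b
    (fun t x => x / b * (c1 + (eps + a ^ 2 / 4) * t - a / 2 * ln x
                + 1 / (2 * k) * (delta * sqrt (1 - 4 * eps * k ^ 2) - 1)
                  * (1 / k * t + ln x))).
Proof.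
intros Ha Hb He Hd Hk.
assert (Hk0 : k <> 0).
{ destruct Hk as [[_ H]|[_ [H _]]]; auto. intro; subst k; rewrite Rabs_R0 in H; lra. }
assert (Hnn : 0 <= 1 - 4 * eps * k ^ 2).
{ destruct Hk as [[-> _]|[-> [_ H]]]. nra.
  assert (k^2 = Rabs k ^2). { rewrite <- Rsqr_pow2, <- Rsqr_pow2. apply Rsqr_abs. }
  rewrite H0. pose proof (Rabs_pos k). nra. }
pose proof (Rsqr_sqrt _ Hnn) as Hq. unfold Rsqr in Hq.
set (q := sqrt (1 - 4 * eps * k ^ 2)) in *. clearbody q.
set (A := 1 / (2 * k) * (delta * q - 1)).
assert (HA : eps + A / k + A ^ 2 = 0).
{ unfold A. replace (eps + 1 / (2 * k) * (delta * q - 1) / k + (1 / (2 * k) * (delta * q - 1)) ^ 2)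
   with (((delta*q-1)^2/4 + (delta*q-1)/2 + eps*k^2)/k^2) by (field; auto).
  replace ((delta*q-1)^2/4 + (delta*q-1)/2 + eps*k^2) with 0. field; auto.
  destruct Hd; subst delta; nra. }
clearbody A.
exists (fun t x => x / b * (eps + a ^ 2 / 4 + A * (1/k))),
  (fun t x => 1 / b * (c1 + (eps + a ^ 2 / 4) * t - a / 2 * ln x + A * (1 / k * t + ln x))
     + (A - a/2) / b),
  (fun t x => (A - a/2) / (b * x)).
intros t x Ht Hx.
assert (Hxb : 0 < x/b) by (apply Rdiv_lt_0_compat; lra).
split; [|split; [|split]].
- auto_derive; [side x b | fin x b].
- auto_derive; [side x b | fin x b].
- auto_derive; [side x b | fin x b].
- cbv beta. replace (x / b * (eps + a ^ 2 / 4 + A * (1 / k)) + a * x ^ 2 * ((A - a / 2) / (b * x)) +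
    b * x ^ 3 * ((A - a / 2) / (b * x)) ^ 2) with (x / b * (eps + A / k + A ^ 2)).
  rewrite HA; ring. field; repeat split; first [assumption | apply Rgt_not_eq; posi].
Qed.

Theorem mainTheorem5 :
  forall a b : R, 0 < a -> 0 < b ->
  forall c1 c2 eps delta k : R,
  (eps = 1 \/ eps = -1) -> (delta = 1 \/ delta = -1) ->
  is_BS_solution a b
    (fun t x => c1 + a / (2 * b) * x * (c2 + a / 2 * t - ln x)) /\
  is_BS_solution a b
    (fun t x => c1 - t + 4 * delta * sqrt (x / b)
                + a / (2 * b) * x * (c2 + a / 2 * t - ln x)) /\
  is_BS_solution a b
    (fun t x => c1 + (a + 2 * eps) / (2 * b) * x
                     * (c2 + (a - 2 * eps) / 2 * t - ln x)) /\
  is_BS_solution a b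
    (fun t x => eps * c1 ^ 2 * exp (- eps * t)
                + 4 * delta * c1 * exp (- (eps / 2) * t) * sqrt (x / b)
                + (a + 2 * eps) / (2 * b) * x
                    * (c2 + (a - 2 * eps) / 2 * t - ln x)) /\
  ((eps = -1 /\ k <> 0) \/ (eps = 1 /\ 0 < Rabs k /\ Rabs k <= 1 / 2) ->
   is_BS_solution a b
    (fun t x => x / b * (c1 + (eps + a ^ 2 / 4) * t - a / 2 * ln x
                + 1 / (2 * k) * (delta * sqrt (1 - 4 * eps * k ^ 2) - 1)
                  * (1 / k * t + ln x)))).
Proof.
intros a b Ha Hb c1 c2 eps delta k He Hd.
split; [apply part1; auto|].
split; [apply part2; auto|].
split; [apply part3; auto|].
split; [apply part4; auto|].
intros; apply part5; auto.
Qed.
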